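(* Let $\omega\ge1$, $n\ge1$, and $0\le A_i,B_i<2^\omega$ for $0\le i\le n-1$. Let $c_0=0$ and $c_{i+1}=\lfloor (A_i+B_i+c_i)/2^\omega\rfloor$. Suppose $\mathsf t_i,\mathsf p_i\in\{0,\dots,255\}$ are such that for each $i$ the case of $(\mathsf t_i,\mathsf p_i)$ with respect to base $256$ equals the case of $(A_i,B_i)$ with respect to base $2^\omega$. Let $\mathsf s_0,\dots,\mathsf s_{n-1}\in\{0,\dots,255\}$ be defined by $\sum_{i=0}^{n-1}256^i\mathsf s_i=\big(\sum_{i=0}^{n-1}256^i\mathsf t_i+\sum_{i=0}^{n-1}256^i\mathsf p_i\big)\bmod 256^n$. Then for every $0\le i\le n-1$, $(\mathsf s_i-\mathsf t_i-\mathsf p_i)\bmod 256=c_i$.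
   Context: For a base $b\ge2$ and integers $0\le x,y<b$, the case of $(x,y)$ with respect to base $b$ is $\mathbf N$ if $x+y\le b-2$, $\mathbf P$ if $x+y=b-1$, and $\mathbf G$ if $x+y\ge b$. *)

(* Defs.v *)
From mathcomp Require Import all_boot all_algebra.
Set Implicit Arguments. Unset Strict Implicit. Unset Printing Implicit Defensive.

Inductive digit_case := CaseN | CaseP | CaseG.

Definition case_of (b x y : nat) : digit_case :=
  if x + y <= b - 2 then CaseN
  else if x + y == b - 1 then CaseP
  else CaseG.

Fixpoint carry (omega : nat) (A B : nat -> nat) (i : nat) : nat :=
  match i with
  | 0 => 0
  | i'.+1 => (A i' + B i' + carry omega A B i') %/ 2 ^ omega
  end.

(* Main.v *)
Require Import Defs.
From mathcomp Require Import all_boot all_algebra zify.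
Import GRing.Theory Num.Theory.

Lemma case_div b x y c : 2 <= b -> x < b -> y < b -> c <= 1 ->
  (x + y + c) %/ b = match case_of b x y with CaseN => 0 | CaseP => c | CaseG => 1 end.
Proof.
move=> hb hx hy hc; rewrite /case_of.
have: c = 0 \/ c = 1 by lia.
case=> -> ; case: ifP => h1; try case: ifP => h2; nia.
Qed.

Fixpoint dc (t p : nat -> nat) (i : nat) : nat :=
  match i with 0 => 0 | i'.+1 => (t i' + p i' + dc t p i') %/ 256 end.

Lemma expand t p k : (forall i, i < k -> t i < 256) -> (forall i, i < k -> p i < 256) ->
  \sum_(i < k) 256 ^ i * t i + \sum_(i < k) 256 ^ i * p i
  = \sum_(i < k) 256 ^ i * ((t i + p i + dc t p i) %% 256) + 256 ^ k * dc t p k.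
Proof.
elim: k => [|k IH] ht hp; first by rewrite !big_ord0.
rewrite !big_ord_recr /=.
have -> : \sum_(i < k) 256 ^ i * t i + 256 ^ k * t k + (\sum_(i < k) 256 ^ i * p i + 256 ^ k * p k)
  = (\sum_(i < k) 256 ^ i * t i + \sum_(i < k) 256 ^ i * p i) + 256 ^ k * (t k + p k) by lia.
rewrite IH; last (by move=> i hi; apply: hp; lia); last (by move=> i hi; apply: ht; lia).
have e := divn_eq (t k + p k + dc t p k) 256.
rewrite expnSr.
change (dc t p k.+1) with ((t k + p k + dc t p k) %/ 256).
set X := 256 ^ k. set r := _ %% 256 in e *. set q := _ %/ 256 in e *.
set S := \sum_(i < k) _.
nia.
Qed.

Lemma sum_lt x k : (forall i, i < k -> x i < 256) -> \sum_(i < k) 256 ^ i * x i < 256 ^ k.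
Proof.
elim: k => [|k IH] hx; first by rewrite big_ord0.
rewrite big_ord_recr /= expnSr.
have h1 := IH (fun i hi => hx i (ltn_trans hi (ltnSn k))).
have h2 := hx k (ltnSn k).
move: h1 h2; set S := \sum_(i < k) _; set X := 256 ^ k => h1 h2.
have : X * x k <= X * 255 by rewrite leq_mul2l; lia.
lia.
Qed.

Lemma uniq_digits k : forall x y, (forall i, i < k -> x i < 256) -> (forall i, i < k -> y i < 256) ->
  \sum_(i < k) 256 ^ i * x i = \sum_(i < k) 256 ^ i * y i -> forall i, i < k -> x i = y i.
Proof.
elim: k => [|k IH] x y hx hy e i hi; first by [].
move: e; rewrite !big_ord_recl /= !expn0 !mul1n.
under eq_bigr => j _ do rewrite /bump /= add1n expnS -mulnA.
under [X in _ = _ + X]eq_bigr => j _ do rewrite /bump /= add1n expnS -mulnA.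
rewrite -!big_distrr /= => e.
have hx0 := hx 0 isT. have hy0 := hy 0 isT.
have e0 : x 0 = y 0.
  have := congr1 (modn^~ 256) e => /=.
  by rewrite (addnC (x 0)) mulnC modnMDl modn_small // (addnC (y 0)) mulnC modnMDl modn_small.
case: i hi => [|i] hi; first exact: e0.
have e1 : \sum_(j < k) 256 ^ j * x j.+1 = \sum_(j < k) 256 ^ j * y j.+1.
  by move: e; rewrite e0 => /addnI /eqP; rewrite eqn_pmul2l // => /eqP.
apply: (IH (fun j => x j.+1) (fun j => y j.+1)) => //.
- by move=> j hj; apply: hx.
- by move=> j hj; apply: hy.
Qed.

Theorem lemma2 (omega n : nat) (A B t p s : nat -> nat) :
  1 <= omega -> 1 <= n ->
  (forall i, i < n -> A i < 2 ^ omega) ->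
  (forall i, i < n -> B i < 2 ^ omega) ->
  (forall i, i < n -> t i < 256) ->
  (forall i, i < n -> p i < 256) ->
  (forall i, i < n -> case_of 256 (t i) (p i) = case_of (2 ^ omega) (A i) (B i)) ->
  (forall i, i < n -> s i < 256) ->
  \sum_(i < n) 256 ^ i * s i
    = (\sum_(i < n) 256 ^ i * t i + \sum_(i < n) 256 ^ i * p i) %% 256 ^ n ->
  forall i, i < n ->
    ((Posz (s i) - Posz (t i) - Posz (p i))%R %% 256)%Z = Posz (carry omega A B i).
Proof.
move=> hw hn hA hB ht hp hcase hs hsum.
have hb : 2 <= 2 ^ omega.
  by rewrite -{1}(expn1 2) leq_exp2l.
have hd : forall i, i <= n -> dc t p i <= 1.
  elim=> [|i IH] hi //=.
  have := IH (ltnW hi); have := ht i hi; have := hp i hi.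
  move=> h1 h2 h3; rewrite leqNgt; apply/negP => h.
  have : 2 * 256 <= t i + p i + dc t p i by rewrite -leq_divRL.
  lia.
have hc : forall i, i <= n -> carry omega A B i <= 1.
  elim=> [|i IH] hi //=.
  have := IH (ltnW hi); have := hA i hi; have := hB i hi.
  move=> h1 h2 h3; rewrite leqNgt; apply/negP => h.
  have : 2 * 2 ^ omega <= A i + B i + carry omega A B i by rewrite -leq_divRL // expn_gt0.
  nia.
have heq : forall i, i < n -> dc t p i = carry omega A B i.
  elim=> [|i IH] hi //=.
  have hi' : i < n by lia.
  rewrite (@case_div 256 (t i) (p i) (dc t p i) _ (ht i hi') (hp i hi') (hd i (ltnW hi'))) //.
  rewrite (@case_div _ (A i) (B i) (carry omega A B i) hb (hA i hi') (hB i hi') (hc i (ltnW hi'))).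
  by rewrite hcase // IH.
have hs' : forall i, i < n -> s i = (t i + p i + dc t p i) %% 256.
  apply: (@uniq_digits n s (fun i => (t i + p i + dc t p i) %% 256)) => //.
    by move=> i _; rewrite ltn_mod.
  rewrite hsum expand // addnC mulnC modnMDl modn_small //.
  apply: (@sum_lt (fun i => (t i + p i + dc t p i) %% 256)) => i _; by rewrite ltn_mod.
move=> i hi.
rewrite -heq // hs' //.
have e := divn_eq (t i + p i + dc t p i) 256.
set q := _ %/ 256 in e. set r := _ %% 256 in e *.
have -> : (Posz r - Posz (t i) - Posz (p i))%R = ((- Posz q) * 256 + Posz (dc t p i))%R.
  have : Posz (t i + p i + dc t p i) = Posz (q * 256 + r) by rewrite -e.
  rewrite !PoszD !PoszM => h. lia.
rewrite modzMDl modz_small //.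
apply/andP; split => //.
have := hd i (ltnW hi). lia.
Qed.
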